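(* Consider the market objective described in the context and fix a bid profile $\mathcal{B}$ with $J(\mathcal{B}_L)<\infty$. Let $$k_{\mathrm{feas}}=\max\{|R|:\ R\subseteq L,\ J(\mathcal{B}_{L\setminus R})<\infty\}$$ be the maximum number of bidders that can be removed while keeping the problem feasible, and assume $k_{\mathrm{feas}}\ge1$. Then for all $K,S\subseteq L$ with $J(\mathcal{B}_{S\setminus K})<\infty$, $$\frac{1}{k_{\mathrm{feas}}}\sum_{l\in K}\big[J(\mathcal{B}_{S\setminus\{l\}})-J(\mathcal{B}_S)\big]\le J(\mathcal{B}_{S\setminus K})-J(\mathcal{B}_S).$$ Consequently the market objective is weakly supermodular, with supermodularity ratio $\gamma_{\sup}\ge 1/k_{\mathrm{feas}}>0$ (where $k_{\mathrm{feas}}$ is taken as the maximum over the bid profiles considered); in particular, if the problem becomes infeasible whenever any two bidders are removed ($k_{\mathrm{feas}}=1$), the inequality holds with constant $1$.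
   Context: Market model. $L=\{1,\dots,|L|\}$ is a finite set of bidders and $t\ge1$. Bidder $l$ submits a bid function $b_l:\hat{\mathcal X}_l\to\mathbb{R}_+$ with $0\in\hat{\mathcal X}_l\subseteq\mathbb{R}^t_+$, $b_l(0)=0$; a bid profile is $\mathcal{B}=\{b_l\}_{l\in L}$. Fixed functions $d:\mathbb{R}^{t|L|}_+\times\mathbb{R}^p\to\mathbb{R}$ and $g:\mathbb{R}^{t|L|}_+\times\mathbb{R}^p\to\mathbb{R}^q$ are given. For $S\subseteq L$, $$J(\mathcal{B}_S)=\min\Big\{\sum_{l\in S}b_l(x_l)+d(x,y):\ x\in\textstyle\prod_{l\in L}\hat{\mathcal X}_l,\ y\in\mathbb{R}^p,\ g(x,y)\le0,\ x_l=0\ \forall l\notin S\Big\},$$ with value $+\infty$ if the problem is infeasible (minima assumed attained when finite). Supermodularity ratio of the market objective: the largest $\gamma\ge0$ such that for every bid profile $\mathcal{B}$ and all $K,S\subseteq L$ with $J(\mathcal{B}_{S\setminus K})<\infty$, $$\gamma\sum_{l\in K}\big[J(\mathcal{B}_{S\setminus\{l\}})-J(\mathcal{B}_S)\big]\le J(\mathcal{B}_{S\setminus K})-J(\mathcal{B}_S);$$ the objective is weakly supermodular if this ratio is positive. *)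

(* Defs.v *)
From Stdlib Require Import Reals ClassicalEpsilon.
From mathcomp Require Import all_boot.
Set Implicit Arguments. Unset Strict Implicit. Unset Printing Implicit Defensive.

Definition sumR (A : Type) (s : seq A) (f : A -> R) : R :=
  foldr (fun a acc => Rplus (f a) acc) R0 s.

Section Market.
(* bidders L = 'I_N (N = |L|); R^t = 'I_t -> R; y in R^p; g has q components *)
Variables (N t p q : nat).
Variable X : 'I_N -> ('I_t -> R) -> Prop.
Variable b : 'I_N -> ('I_t -> R) -> R.
Variable d : ('I_N -> 'I_t -> R) -> ('I_p -> R) -> R.
Variable g : ('I_N -> 'I_t -> R) -> ('I_p -> R) -> 'I_q -> R.

Definition feasible (S : {set 'I_N}) (x : 'I_N -> 'I_t -> R) (y : 'I_p -> R) : Prop :=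
  (forall l, X l (x l)) /\ (forall j, Rle (g x y j) R0) /\
  (forall l, l \notin S -> forall i, x l i = R0).

Definition objective (S : {set 'I_N}) (x : 'I_N -> 'I_t -> R) (y : 'I_p -> R) : R :=
  Rplus (sumR (enum S) (fun l => b l (x l))) (d x y).

Definition IsMinVal (S : {set 'I_N}) (v : R) : Prop :=
  (exists x y, feasible S x y /\ objective S x y = v) /\
  (forall x y, feasible S x y -> Rle v (objective S x y)).

(* J(B_S) in R u {+oo}: Some v = finite minimum v, None = +oo *)
Definition J (S : {set 'I_N}) : option R :=
  match excluded_middle_informative (exists v, IsMinVal S v) with
  | left H => Some (proj1_sig (constructive_indefinite_description _ H))
  | right _ => None
  end.

Definition kfeas : nat := \max_(Rm : {set 'I_N} | isSome (J (~: Rm))) #|Rm|.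

End Market.

(* Main.v *)
Require Import Defs.
From Stdlib Require Import Reals Lra FunctionalExtensionality ClassicalEpsilon.
From mathcomp Require Import all_boot.

Lemma cnt (T : finType) (S K : {set T}) : count (mem S) (enum K) = #|K :&: S|.
Proof.
rewrite cardE /enum_mem -size_filter -filter_predI; congr size; apply: eq_filter => x.
by rewrite !inE andbC.
Qed.

Lemma sumR_filter (A : Type) (s : seq A) (f : A -> R) (P : pred A) :
  (forall a, ~~ P a -> f a = R0) -> sumR s f = sumR (filter P s) f.
Proof.
move=> H; elim: s => [|a s IH] //=.
case Pa: (P a) => /=; rewrite IH //.
rewrite H ?Pa //; ring.
Qed.

Section S.
Variables (N t p q : nat).
Variable X : 'I_N -> ('I_t -> R) -> Prop.
Variable b : 'I_N -> ('I_t -> R) -> R.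
Variable d : ('I_N -> 'I_t -> R) -> ('I_p -> R) -> R.
Variable g : ('I_N -> 'I_t -> R) -> ('I_p -> R) -> 'I_q -> R.
Hypothesis hb0 : forall l, b l (fun _ => R0) = R0.
Hypothesis hatt : forall S : {set 'I_N},
      (exists x y, feasible X g S x y) -> exists v, IsMinVal X b d g S v.

Lemma minval_uniq S v w : IsMinVal X b d g S v -> IsMinVal X b d g S w -> v = w.
Proof.
move=> [[x [y [Fx Ox]]] Hv] [[x' [y' [Fx' Ox']]] Hw].
have := Hv _ _ Fx'; have := Hw _ _ Fx. lra.
Qed.

Lemma J_spec S v : J X b d g S = Some v -> IsMinVal X b d g S v.
Proof.
rewrite /J; case: excluded_middle_informative => // H [<-].
exact: proj2_sig (constructive_indefinite_description _ H).
Qed.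

Lemma J_some S v : IsMinVal X b d g S v -> J X b d g S = Some v.
Proof.
move=> Hv; rewrite /J; case: excluded_middle_informative => H.
- congr Some; apply: minval_uniq; last exact: Hv.
  exact: proj2_sig (constructive_indefinite_description _ H).
- by exfalso; apply: H; exists v.
Qed.

Lemma obj_eq (A B : {set 'I_N}) x y : A \subset B ->
  (forall l, l \notin A -> forall i, x l i = R0) ->
  objective b d B x y = objective b d A x y.
Proof.
move=> sAB Hx; rewrite /objective; congr Rplus.
rewrite (@sumR_filter _ _ _ (mem A)).
- rewrite /enum_mem -filter_predI; congr sumR; apply: eq_filter => l.
  rewrite /=; case lA: (l \in A) => //=; by rewrite (subsetP sAB).
- move=> l lA; have -> : x l = (fun _ => R0) by apply: functional_extensionality; exact: Hx.
  exact: hb0.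
Qed.

Lemma mono (A B : {set 'I_N}) a : A \subset B -> J X b d g A = Some a ->
  exists bv, J X b d g B = Some bv /\ Rle bv a.
Proof.
move=> sAB /J_spec [[x [y [[F1 [F2 F3]] Ox]]] _].
have FB : feasible X g B x y.
  split; [done | split; [done|]] => l lB; apply: F3.
  by apply: contra lB; apply: (subsetP sAB).
have [bv Hbv] : exists v, IsMinVal X b d g B v by apply: hatt; exists x, y.
exists bv; split; first exact: J_some.
have := proj2 Hbv _ _ FB; rewrite (@obj_eq A B x y sAB F3) Ox; done.
Qed.
End S.

Theorem theorem2 (N t p q : nat)
  (X : 'I_N -> ('I_t -> R) -> Prop) (b : 'I_N -> ('I_t -> R) -> R)
  (d : ('I_N -> 'I_t -> R) -> ('I_p -> R) -> R)
  (g : ('I_N -> 'I_t -> R) -> ('I_p -> R) -> 'I_q -> R)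
  (* \hat X_l is a subset of R^t_+ containing 0 *)
  (hXpos : forall l z, X l z -> forall i, Rle R0 (z i))
  (hX0 : forall l, X l (fun _ => R0))
  (* b_l : \hat X_l -> R_+, b_l(0) = 0 *)
  (hbpos : forall l z, X l z -> Rle R0 (b l z))
  (hb0 : forall l, b l (fun _ => R0) = R0)
  (* minima are attained whenever the problem is feasible with finite value *)
  (hatt : forall S : {set 'I_N},
      (exists x y, feasible X g S x y) -> exists v, IsMinVal X b d g S v)
  (* J(B_L) < oo *)
  (hL : isSome (J X b d g [set: 'I_N]))
  (* k_feas >= 1 *)
  (hk : (1 <= kfeas X b d g)%N) :
  forall (K S : {set 'I_N}) (vSK : R),
    J X b d g (S :\: K) = Some vSK ->
    exists (vS : R) (fS : 'I_N -> R),
      J X b d g S = Some vS /\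
      (forall l, l \in K -> J X b d g (S :\ l) = Some (fS l)) /\
      Rle (Rmult (Rinv (INR (kfeas X b d g))) (sumR (enum K) (fun l => Rminus (fS l) vS)))
          (Rminus vSK vS).
Proof.
move=> K S vSK HSK.
have [vS [HS HvS]] := @mono N t p q X b d g hb0 hatt _ _ _ (subsetDl S K) HSK.
pose fS l := match J X b d g (S :\ l) with Some v => v | None => R0 end.
have HfS : forall l, l \in K -> J X b d g (S :\ l) = Some (fS l) /\
    Rle vS (fS l) /\ Rle (fS l) vSK /\ (l \notin S -> fS l = vS).
  move=> l lK.
  have sub : S :\: K \subset S :\ l.
    apply/subsetP => z; rewrite !inE => /andP [zK ->]; rewrite andbT.
    by apply: contra zK => /eqP ->.
  have [f [Hf Hf1]] := @mono N t p q X b d g hb0 hatt _ _ _ sub HSK.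
  have [v' [Hv' Hv'1]] := @mono N t p q X b d g hb0 hatt _ _ _ (subsetDl S [set l]) Hf.
  rewrite HS in Hv'; case: Hv' => <- in Hv'1.
  have E : fS l = f by rewrite /fS Hf.
  rewrite E; split; [done | split; [done | split; [done|]]].
  move=> lS; have eq : S :\ l = S.
    apply/setP => z; rewrite !inE; case: eqP => // ->; by rewrite (negbTE lS).
  by rewrite eq HS in Hf; case: Hf.
exists vS, fS; split; first done; split; first by move=> l /HfS [].
set k := kfeas X b d g.
have kpos : Rlt R0 (INR k) by apply: lt_0_INR; apply/ltP.
have Hsum : Rle (sumR (enum K) (fun l => Rminus (fS l) vS))
               (Rmult (INR (count (mem S) (enum K))) (Rminus vSK vS)).
  have : forall l, l \in enum K -> (l \in S -> Rle (Rminus (fS l) vS) (Rminus vSK vS)) /\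
          (l \notin S -> Rminus (fS l) vS = R0).
    move=> l; rewrite mem_enum => /HfS [_ [_ [H2 H3]]]; split=> [_|lS]; first lra.
    rewrite H3 //; lra.
  have : Rle R0 (Rminus vSK vS) by lra.
  elim: (enum K) => [|a s IH] c0 H; first (simpl; lra).
  have [Ha1 Ha2] := H a (mem_head _ _).
  have IH' := IH c0 (fun l ls => H l ltac:(by rewrite inE ls orbT)).
  have -> : count (mem S) (a :: s) = ((a \in S) + count (mem S) s)%N by [].
  rewrite [sumR (_ :: _) _]/=.
  case aS: (a \in S).
  - rewrite add1n S_INR Rmult_plus_distr_r Rmult_1_l. apply: Rle_trans (Rplus_le_compat _ _ _ _ (Ha1 aS) IH') _; right; ring.
  - rewrite add0n Ha2 ?aS //. rewrite Rplus_0_l; exact: IH'.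
have Hcnt : (count (mem S) (enum K) <= k)%N.
  have Hm := @leq_bigmax_cond _ (fun Rm : {set 'I_N} => isSome (J X b d g (~: Rm)))
     (fun Rm => #|Rm|) (~: (S :\: K)) ltac:(by rewrite /= setCK HSK).
  rewrite cnt; apply: leq_trans Hm.
  apply: subset_leq_card.
  apply/subsetP => z; rewrite !inE => /andP [-> _]; done.
have Hle : Rle (INR (count (mem S) (enum K))) (INR k) by apply: le_INR; apply/leP.
apply (Rmult_le_reg_l (INR k)); first done.
rewrite -Rmult_assoc Rinv_r; last lra.
rewrite Rmult_1_l.
apply: (Rle_trans _ _ _ Hsum); apply: Rmult_le_compat_r; lra.
Qed.
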